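(* Let $(T_1,T_2)$ be an ordered binary forest on $\{1,\dots,m-1\}$, let $x_i=|L(T_i)|$ for $i=1,2$, and assume $x_1\ge x_2$. Let $T_0$ be the binary phylogenetic tree on $\{1,\dots,m\}$ with root $z$ having children $a$ and the leaf $m$, where $a$ has children the roots of $T_1$ and $T_2$. Let $T$ be a binary phylogenetic tree with $n$ leaves having $T_0$ as the subtree rooted at some node. If $\Phi(T)$ is minimum among all binary phylogenetic trees with $n$ leaves, then $x_1=x_2=1$.
   Context: A phylogenetic tree on a finite set $S$ is a rooted tree whose leaves are bijectively labeled by $S$, every internal node having at least two children; binary means exactly two children; a tree with $n$ leaves is one on $\{1,\dots,n\}$. $L(T)$ is the leaf set. An ordered binary $k$-forest on $S$ is a sequence of $k$ binary phylogenetic trees on pairwise disjoint sets with union $S$. The subtree rooted at a node $v$ is the subgraph induced on the descendants of $v$. The depth $\delta_T(v)$ is the number of arcs from the root to $v$; for leaves $i\ne j$, $\varphi_T(i,j)=\delta_T(LCA_T(i,j))$ ($LCA$ = lowest common ancestor), and $\Phi(T)$ is the sum of $\varphi_T(i,j)$ over all unordered pairs of distinct leaves. *)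

(* Defs.v *)
From mathcomp Require Import all_boot.
Set Implicit Arguments. Unset Strict Implicit. Unset Printing Implicit Defensive.

(* Rooted binary trees with nat-labelled leaves (children ordered only for
   representation; rooted-tree identity is taken up to swapping children). *)
Inductive btree := BLeaf of nat | BNode of btree & btree.

Fixpoint leaves (t : btree) : seq nat :=
  match t with BLeaf i => [:: i] | BNode l r => leaves l ++ leaves r end.

Definition phylo_on (S : seq nat) (t : btree) : Prop :=
  uniq (leaves t) /\ perm_eq (leaves t) S.

Definition tree_on (n : nat) (t : btree) : Prop := phylo_on (iota 1 n) t.

Definition forest2_on (S : seq nat) (t1 t2 : btree) : Prop :=
  uniq (leaves t1 ++ leaves t2) /\ perm_eq (leaves t1 ++ leaves t2) S.

Fixpoint lca_depth (t : btree) (i j : nat) : nat :=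
  match t with
  | BLeaf _ => 0
  | BNode l r =>
      if (i \in leaves l) && (j \in leaves l) then (lca_depth l i j).+1
      else if (i \in leaves r) && (j \in leaves r) then (lca_depth r i j).+1
      else 0
  end.

Definition Phi (t : btree) : nat :=
  \sum_(i <- leaves t) \sum_(j <- leaves t | i < j) lca_depth t i j.

Fixpoint teq (a b : btree) : bool :=
  match a, b with
  | BLeaf i, BLeaf j => i == j
  | BNode a1 a2, BNode b1 b2 => (teq a1 b1 && teq a2 b2) || (teq a1 b2 && teq a2 b1)
  | _, _ => false
  end.

Fixpoint is_subtree (s t : btree) : bool :=
  teq s t || match t with BLeaf _ => false | BNode l r => is_subtree s l || is_subtree s r end.

(* Main.v *)
Require Import Defs.
From mathcomp Require Import all_boot.
From mathcomp Require Import zify.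
Set Implicit Arguments. Unset Strict Implicit.

Definition pairs (s : seq nat) : nat := \sum_(i <- s) \sum_(j <- s | i < j) 1.

Fixpoint Q (t : btree) : nat :=
  match t with BLeaf _ => 0
  | BNode l r => Q l + Q r + pairs (leaves l) + pairs (leaves r) end.

Lemma pairs_perm s s' : perm_eq s s' -> pairs s = pairs s'.
Proof.
move=> P; rewrite /pairs (perm_big _ P); apply: eq_bigr => i _.
by rewrite (perm_big _ P).
Qed.

Lemma aux_cnt x s : x \notin s ->
  count (fun j => x < j) s + \sum_(i <- s) (i < x : nat) = size s.
Proof.
elim: s => [|y s IH]; first by rewrite big_nil.
rewrite inE negb_or => /andP[xy xs]; rewrite big_cons /= -(IH xs).
case: (ltngtP x y) => h /=; try lia.

Qed.

Lemma pairs_uniq s : uniq s -> pairs s = 'C(size s, 2).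
Proof.
elim: s => [|x s IH]; first by rewrite /pairs big_nil.
move=> /= /andP[xs us].
have E : forall r, pairs r = \sum_(i <- r) count (fun j => i < j) r.
  by move=> r; apply: eq_bigr => i _; rewrite sum1_count.
rewrite binS bin1 -(IH us) !E big_cons /= ltnn add0n.
rewrite (eq_bigr (fun i => (i < x : nat) + count (fun j => i < j) s)) //.
by rewrite big_split /= addnA (aux_cnt xs) addnC.
Qed.

Lemma Phi_leaf i : Phi (BLeaf i) = 0.
Proof. by rewrite /Phi /= big_seq1 big_mkcond big_seq1 ltnn. Qed.

Lemma Phi_node l r : uniq (leaves l ++ leaves r) ->
  Phi (BNode l r) = Phi l + Phi r + pairs (leaves l) + pairs (leaves r).
Proof.
rewrite cat_uniq => /and3P[ul /hasPn dis ur].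
have nL : forall j, j \in leaves r -> j \notin leaves l.
  by move=> j /dis.
rewrite /Phi /pairs /= big_cat /=.
have -> : \sum_(i <- leaves l) \sum_(j <- leaves l ++ leaves r | i < j)
             lca_depth (BNode l r) i j =
          \sum_(i <- leaves l) \sum_(j <- leaves l | i < j) (lca_depth l i j + 1).
  rewrite big_seq [RHS]big_seq; apply: eq_bigr => i iL.
  rewrite big_cat /= [X in _ + X]big1_seq ?addn0.
    rewrite big_seq_cond [RHS]big_seq_cond; apply: eq_bigr => j /andP[jL _].
    by rewrite /= iL jL addn1.
  move=> j /andP[_ jR] /=; rewrite iL (negbTE (nL _ jR)) /=.
  have : i \notin leaves r by apply/negP => /nL; rewrite iL.
  by move/negbTE ->.
have -> : \sum_(i <- leaves r) \sum_(j <- leaves l ++ leaves r | i < j)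
             lca_depth (BNode l r) i j =
          \sum_(i <- leaves r) \sum_(j <- leaves r | i < j) (lca_depth r i j + 1).
  rewrite big_seq [RHS]big_seq; apply: eq_bigr => i iR.
  rewrite big_cat /= big1_seq ?add0n.
    rewrite big_seq_cond [RHS]big_seq_cond; apply: eq_bigr => j /andP[jR _].
    by rewrite /= (negbTE (nL _ iR)) iR jR addn1.
  move=> j /andP[_ jL] /=; rewrite (negbTE (nL _ iR)) /=.
  have : j \notin leaves r by apply/negP => /nL; rewrite jL.
  by move/negbTE ->; rewrite andbF.
have S : forall (L : seq nat) (f : nat -> nat -> nat),
  \sum_(i <- L) \sum_(j <- L | i < j) (f i j + 1) =
  \sum_(i <- L) \sum_(j <- L | i < j) f i j + \sum_(i <- L) \sum_(j <- L | i < j) 1.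
  move=> L f; rewrite -big_split; apply: eq_bigr => i _; exact: big_split.
rewrite !S; lia.
Qed.

Lemma Phi_Q t : uniq (leaves t) -> Phi t = Q t.
Proof.
elim: t => [i|l IHl r IHr]; first by rewrite Phi_leaf.
move=> u; rewrite Phi_node // /=.
move: u; rewrite cat_uniq => /and3P[ul _ ur].
by rewrite IHl // IHr.
Qed.

Lemma teq_prop s t : teq s t -> perm_eq (leaves s) (leaves t) /\ Q s = Q t.
Proof.
elim: s t => [i|a1 IH1 a2 IH2] [j|b1 b2] //=.
  by move/eqP->.
case/orP => /andP[/IH1 [p1 q1] /IH2 [p2 q2]].
  split; first exact: perm_cat.
  rewrite q1 q2 (pairs_perm p1) (pairs_perm p2); lia.
split; first by rewrite perm_catC; exact: perm_cat.
rewrite q1 q2 (pairs_perm p1) (pairs_perm p2); lia.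
Qed.

Lemma replace s s' t : is_subtree s t -> perm_eq (leaves s') (leaves s) ->
  Q s' < Q s -> exists t', perm_eq (leaves t') (leaves t) /\ Q t' < Q t.
Proof.
move=> + ps qs; elim: t => [i|l IHl r IHr] /=.
  rewrite orbF => /teq_prop [p q]; exists s'; split; first exact: perm_trans p.
  by move: qs; rewrite q.
case/orP; first move=> /teq_prop [p q].
  exists s'; split; first exact: perm_trans p.
  by move: qs; rewrite q.
case/orP => [/IHl [l' [p q]] | /IHr [r' [p q]]].
  exists (BNode l' r); split; first by rewrite /=; exact: perm_cat.
  rewrite /= (pairs_perm p); lia.
exists (BNode l r'); split; first by rewrite /=; exact: perm_cat.
rewrite /= (pairs_perm p); lia.
Qed.

Lemma size_leaves_pos t : 0 < size (leaves t).
Proof. by elim: t => [//|l IHl r IHr]; rewrite /= size_cat; lia. Qed.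

Theorem mainTheorem9 (m n : nat) (T1 T2 T : btree) :
  forest2_on (iota 1 m.-1) T1 T2 ->
  size (leaves T2) <= size (leaves T1) ->
  tree_on n T ->
  is_subtree (BNode (BNode T1 T2) (BLeaf m)) T ->
  (forall T' : btree, tree_on n T' -> Phi T <= Phi T') ->
  size (leaves T1) = 1 /\ size (leaves T2) = 1.
Proof.
move=> [u12 p12] s21 [uT pT] sub minT.
have h1 := size_leaves_pos T1; have h2 := size_leaves_pos T2.
suff : size (leaves T1) <= 1 by lia.
rewrite leqNgt; apply/negP => big.
have mn : m \notin leaves T1 ++ leaves T2.
  by rewrite (perm_mem p12) mem_iota; lia.
have us : uniq ((leaves T1 ++ leaves T2) ++ [:: m]).
  by rewrite cat_uniq u12 /= orbF mn.
have ps : perm_eq (leaves (BNode T1 (BNode T2 (BLeaf m))))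
    (leaves (BNode (BNode T1 T2) (BLeaf m))) by rewrite /= catA.
have qs : Q (BNode T1 (BNode T2 (BLeaf m))) < Q (BNode (BNode T1 T2) (BLeaf m)).
move: us; rewrite -catA => us.
  have u2m : uniq (leaves T2 ++ [:: m]).
    by move: us; rewrite cat_uniq => /and3P[].
  rewrite /= (pairs_uniq u12) (pairs_uniq u2m) !size_cat /=.
  have : 'C(size (leaves T2) + 2, 2) <= 'C(size (leaves T1) + size (leaves T2), 2).
    by apply: leq_bin2l; lia.
  rewrite addn2 binS bin1 addn1; lia.
have [T' [pT' qT']] := replace sub ps qs.
have uT' : uniq (leaves T') by rewrite (perm_uniq pT').
have := minT T' (conj uT' (perm_trans pT' pT)).
by rewrite (Phi_Q uT) (Phi_Q uT'); lia.
Qed.
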